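(* Let $O$ be an order with property (itov) such that its neighbourhood order $N(O)$ contains no infinite strictly decreasing sequence, and let $\alpha$ be the order type of a well-ordered linear extension of $N(O)$. Then $O$ has a total binary questionable representation of length at most $2\cdot\alpha+1$ (ordinal product: $\alpha$ copies of $2$); more precisely, an order embedding of $O$ into $\mathrm{Next}(2,2\cdot\alpha+1,(O^{0,1})_{2\cdot\alpha+1})$.
   Context: Orders are partial orders; $x\sim y$ means $x\ne y$ and $x,y$ incomparable. $O_{obs1}$ is the order on $\{a,b,c,d\}$ whose only comparabilities are $a<b$, $c<d$; $O_{obs2}$ is the order on $\{a,b,c,d\}$ whose only comparabilities are $a<b$, $c<d$, $c<b$. An order has property (itov) iff it has no induced suborder isomorphic to $O_{obs1}$ or $O_{obs2}$. For $x$ let $D(x)=\{z:z<x\}$, $U(x)=\{z:z>x\}$. The neighbourhood order $N(O)$ has the same domain as $O$ with $x<_{N(O)}y$ iff $D(x)\subseteq D(y)$, $U(x)\subseteq U(y)$ and at least one of these inclusions is strict. $O^{0,1}$ is the two-element total order $0<1$. For an ordinal $j$, $\mathcal O_j=(O_k)_{k<j}$ is a sequence of orders; $(O')_j$ is the constant sequence. A word of length $\ell\le j$ is a sequence $(x_k)_{k<\ell}$ with $x_k\in\mathrm{Dom}(O_k)$. The question of two words $X,Y$ is $(k,x_k,y_k)$ for the least $k<\min(\mathrm{len}X,\mathrm{len}Y)$ with $x_k\neq y_k$, if it exists. $\mathrm{Next}(i,j,\mathcal O_j)$ ($i<j$) is the partial order on all words of length $\ell$ with $i\le \ell<j$ where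 $X<Y$ iff they have a question $(k,x_k,y_k)$ with $x_k<y_k$ in $O_k$, and words without a question or with question items incomparable are incomparable. A questionable representation of $O$ is an injective map $f$ into some $\mathrm{Next}(i,j,\mathcal O_j)$ with $f(x)<f(y)\iff x<y$; its length is $j$, its width the supremum of $|\mathrm{Dom}(O_k)|$; it is total if all $O_k$ are total orders, binary if total of width 2. *)

(* Defs.v *)
From Stdlib Require Import Relations Wellfounded.
Set Implicit Arguments.

Section Orders.
Variable T : Type.
Variable lt : T -> T -> Prop.

Definition strict_porder : Prop :=
  (forall x, ~ lt x x) /\ (forall x y z, lt x y -> lt y z -> lt x z).

Definition incomp (x y : T) : Prop := x <> y /\ ~ lt x y /\ ~ lt y x.

Definition has_obs1 : Prop :=
  exists a b c d, lt a b /\ lt c d /\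
    incomp a c /\ incomp a d /\ incomp b c /\ incomp b d.

Definition has_obs2 : Prop :=
  exists a b c d, lt a b /\ lt c d /\ lt c b /\
    incomp a c /\ incomp a d /\ incomp b d.

Definition itov : Prop := ~ has_obs1 /\ ~ has_obs2.

Definition nbh_lt (x y : T) : Prop :=
  (forall z, lt z x -> lt z y) /\ (forall z, lt x z -> lt y z) /\
  ((exists z, lt z y /\ ~ lt z x) \/ (exists z, lt y z /\ ~ lt x z)).

Definition no_inf_decr (r : T -> T -> Prop) : Prop :=
  ~ exists s : nat -> T, forall n, r (s (S n)) (s n).

Definition wo_linear_extension (r L : T -> T -> Prop) : Prop :=
  (forall x, ~ L x x) /\ (forall x y z, L x y -> L y z -> L x z) /\
  (forall x y, x <> y -> L x y \/ L y x) /\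
  (forall x y, r x y -> L x y) /\
  well_founded L.
End Orders.

(* ---- Questionable representations ----
   Positions are a strictly (well-)ordered type P which plays the role of the
   ordinal j (the set of ordinals < j).  A length l < j is an element of P,
   denoting the ordinal l = {k in P | k < l}.  O_k is given by (D k, ltD k). *)
Section Next.
Variable P : Type.
Variable ltP : P -> P -> Prop.
Variable D : P -> Type.
Variable ltD : forall k, D k -> D k -> Prop.

Record word := Word { wlen : P; wval : forall k : P, option (D k) }.

Fixpoint ord_ge_nat (n : nat) (l : P) : Prop :=
  match n with
  | O => True
  | S m => exists k, ltP k l /\ ord_ge_nat m k
  end.

Definition in_Next (i : nat) (w : word) : Prop :=
  ord_ge_nat i (wlen w) /\
  (forall k, ltP k (wlen w) <-> exists a, wval w k = Some a).

Definition next_lt (X Y : word) : Prop :=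
  exists k, ltP k (wlen X) /\ ltP k (wlen Y) /\
    (forall k', ltP k' k -> wval X k' = wval Y k') /\
    exists a b, wval X k = Some a /\ wval Y k = Some b /\ ltD a b.

Definition embeds_into_Next (T : Type) (lt : T -> T -> Prop) (i : nat) : Prop :=
  exists f : T -> word,
    (forall x, in_Next i (f x)) /\
    (forall x y, f x = f y -> x = y) /\
    (forall x y, lt x y <-> next_lt (f x) (f y)).
End Next.

(* The ordinal 2*alpha + 1 for alpha = (T, L): alpha copies of 2 = {0<1}
   (lexicographic, alpha-coordinate major), followed by one top element None. *)
Definition pos2a1 (T : Type) := option (T * bool).

Definition lt_pos2a1 (T : Type) (L : T -> T -> Prop) (p q : pos2a1 T) : Prop :=
  match p, q with
  | Some (a, b), Some (a', b') => L a a' \/ (a = a' /\ b = false /\ b' = true)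
  | Some _, None => True
  | None, _ => False
  end.

Definition lt01 (a b : bool) : Prop := a = false /\ b = true.

(* Main.v *)
Require Import Defs.
From Stdlib Require Import Relations Wellfounded Classical ClassicalEpsilon.
Unset Implicit Arguments.

Lemma tri4 (T : Type) (lt : T -> T -> Prop) x y :
  lt x y \/ lt y x \/ x = y \/ incomp lt x y.
Proof.
  destruct (classic (lt x y)); auto. destruct (classic (lt y x)); auto.
  destruct (classic (x = y)); auto. right; right; right; unfold incomp; tauto.
Qed.

Ltac fin := exfalso; unfold incomp in *; intuition eauto.

Lemma core1 (T : Type) (lt : T -> T -> Prop) (hO : strict_porder lt) (hitov : itov lt)
  x y a : incomp lt x y -> incomp lt y a -> lt x a -> nbh_lt lt y a.
Proof.
  destruct hO as [irr tr]. destruct hitov as [h1 h2].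
  intros Hxy Hya Hxa. unfold incomp in *.
  split; [|split].
  - intros z Hzy.
    destruct (@tri4 _ lt z a) as [H|[H|[H|H]]]; auto.
    + fin.
    + subst. exfalso; tauto.
    + exfalso. destruct (@tri4 _ lt z x) as [H'|[H'|[H'|H']]].
      * fin.
      * fin.
      * subst. tauto.
      * apply h1. exists z, y, x, a. unfold incomp in *. repeat split; try tauto; intro; subst; tauto.
  - intros w Hyw.
    destruct (@tri4 _ lt a w) as [H|[H|[H|H]]]; auto.
    + fin.
    + subst. exfalso; tauto.
    + exfalso. destruct (@tri4 _ lt x w) as [H'|[H'|[H'|H']]].
      * apply h2. exists y, w, x, a. unfold incomp in *. repeat split; try tauto; intro; subst; tauto.
      * fin.
      * subst. tauto.
      * apply h1. exists x, a, y, w. unfold incomp in *. repeat split; try tauto; intro; subst; tauto.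
  - left. exists x. tauto.
Qed.

Lemma core2 (T : Type) (lt : T -> T -> Prop) (hO : strict_porder lt) (hitov : itov lt)
  x y a : incomp lt x y -> incomp lt y a -> lt a x -> nbh_lt lt y a.
Proof.
  destruct hO as [irr tr]. destruct hitov as [h1 h2].
  intros Hxy Hya Hax. unfold incomp in *.
  split; [|split].
  - intros z Hzy.
    destruct (@tri4 _ lt z a) as [H|[H|[H|H]]]; auto.
    + fin.
    + subst. exfalso; tauto.
    + exfalso. destruct (@tri4 _ lt z x) as [H'|[H'|[H'|H']]].
      * apply h2. exists a, x, z, y. unfold incomp in *. repeat split; try tauto; intro; subst; tauto.
      * fin.
      * subst. tauto.
      * apply h1. exists a, x, z, y. unfold incomp in *. repeat split; try tauto; intro; subst; tauto.
  - intros w Hyw.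
    destruct (@tri4 _ lt a w) as [H|[H|[H|H]]]; auto.
    + fin.
    + subst. exfalso; tauto.
    + exfalso. destruct (@tri4 _ lt x w) as [H'|[H'|[H'|H']]].
      * fin.
      * fin.
      * subst. tauto.
      * apply h1. exists a, x, y, w. unfold incomp in *. repeat split; try tauto; intro; subst; tauto.
  - right. exists x. tauto.
Qed.

Definition bP (P : Prop) : bool := if excluded_middle_informative P then true else false.

Lemma bP_t (P : Prop) : bP P = true <-> P.
Proof. unfold bP; destruct (excluded_middle_informative P); split; congruence || tauto. Qed.
Lemma bP_f (P : Prop) : bP P = false <-> ~ P.
Proof. unfold bP; destruct (excluded_middle_informative P); split; congruence || tauto. Qed.
Lemma bP_iff (P Q : Prop) : (P <-> Q) -> bP P = bP Q.
Proof. unfold bP; intro H; destruct (excluded_middle_informative P), (excluded_middle_informative Q); tauto. Qed.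

Lemma wf_min (T : Type) (R : T -> T -> Prop) (P : T -> Prop) :
  well_founded R -> forall a, P a -> exists m, P m /\ forall z, R z m -> ~ P z.
Proof.
  intros wf a Pa. apply NNPP; intro N.
  assert (forall b, ~ P b) as H.
  { intro b. induction b as [b IH] using (well_founded_ind wf).
    intro Pb. apply N. exists b. split; auto. }
  exact (H a Pa).
Qed.

Definition code_val (T : Type) (lt : T -> T -> Prop) x a (b : bool) : bool :=
  if b then negb (bP (lt x a)) else bP (lt a x).

Definition fval (T : Type) (lt L : T -> T -> Prop) x (k : pos2a1 T) : option bool :=
  match k with
  | Some (a, b) => if excluded_middle_informative (L a x \/ a = x)
                   then Some (code_val T lt x a b) else None
  | None => None
  end.

Definition len_spec (T : Type) (L : T -> T -> Prop) x (p : pos2a1 T) :=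
  forall k, lt_pos2a1 L k p <-> exists a b, k = Some (a, b) /\ (L a x \/ a = x).

Lemma len_ex (T : Type) (r L : T -> T -> Prop) (hL : wo_linear_extension r L) x :
  exists p, len_spec T L x p.
Proof.
  destruct hL as [irr [tr [lin [ext wf]]]].
  destruct (classic (exists s, L x s)) as [[s0 Hs0]|Hn].
  - destruct (wf_min T L (fun s => L x s) wf s0 Hs0) as [s [Hs Hmin]].
    exists (Some (s, false)). intros [[a b]|]; simpl; split.
    + intros [H|[H1 [H2 H3]]]; [|discriminate].
      exists a, b; split; auto.
      destruct (classic (a = x)); auto.
      destruct (lin a x) as [H'|H']; auto.
      exfalso. exact (Hmin a H H').
    + intros [a' [b' [E HD]]]. inversion E; subst. left.
      destruct HD as [HD|HD]; [eauto|subst; auto].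
    + tauto.
    + intros [a' [b' [E _]]]; discriminate.
  - exists None. intros [[a b]|]; simpl; split.
    + intros _. exists a, b; split; auto.
      destruct (classic (a = x)); auto.
      destruct (lin a x) as [H'|H']; auto.
      exfalso. apply Hn. eauto.
    + auto.
    + tauto.
    + intros [a' [b' [E _]]]; discriminate.
Qed.

Lemma key (T : Type) (lt : T -> T -> Prop) (hO : strict_porder lt) (hitov : itov lt)
  (L : T -> T -> Prop) (hL : wo_linear_extension (nbh_lt lt) L) x y a :
  incomp lt x y -> (L a x \/ a = x) -> (L a y \/ a = y) ->
  (lt a x <-> lt a y) /\ (lt x a <-> lt y a).
Proof.
  intros Hxy Dx Dy.
  pose proof hO as [irr tr].
  destruct hL as [Lirr [Ltr [Llin [Lext Lwf]]]].
  assert (Hs : incomp lt y x) by (unfold incomp in *; intuition).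
  destruct (classic (a = x)) as [->|nx].
  { unfold incomp in Hxy. split; split; intro H; try (exfalso; apply (irr _ H); fail); tauto. }
  destruct (classic (a = y)) as [->|ny].
  { unfold incomp in Hxy. split; split; intro H; try (exfalso; apply (irr _ H); fail); tauto. }
  destruct Dx as [Dx|]; [|congruence]. destruct Dy as [Dy|]; [|congruence].
  assert (G : forall u v, incomp lt u v -> L a u -> L a v ->
             (lt u a -> lt v a) /\ (lt a u -> lt a v)).
  { clear x y Hxy Dx Dy Hs nx ny. intros u v Huv Du Dv. split; intro H.
    - apply NNPP; intro Nv.
      destruct (@tri4 _ lt v a) as [h|[h|[h|h]]].
      + tauto.
      + apply (proj1 (proj2 Huv)). eapply tr; eauto.
      + subst. exact (Lirr _ Dv).
      + pose proof (core1 _ _ hO hitov _ _ _ Huv h H) as Nb.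
        apply Lext in Nb. exact (Lirr _ (Ltr _ _ _ Nb Dv)).
    - apply NNPP; intro Nv.
      destruct (@tri4 _ lt v a) as [h|[h|[h|h]]].
      + apply (proj2 (proj2 Huv)). eapply tr; eauto.
      + tauto.
      + subst. exact (Lirr _ Dv).
      + pose proof (core2 _ _ hO hitov _ _ _ Huv h H) as Nb.
        apply Lext in Nb. exact (Lirr _ (Ltr _ _ _ Nb Dv)). }
  destruct (G x y Hxy Dx Dy), (G y x Hs Dy Dx). tauto.
Qed.

Lemma fval_some (T : Type) (lt L : T -> T -> Prop) x a b v :
  fval T lt L x (Some (a, b)) = Some v -> (L a x \/ a = x) /\ code_val T lt x a b = v.
Proof.
  simpl. destruct (excluded_middle_informative (L a x \/ a = x)); intro E; [|discriminate].
  inversion E; auto.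
Qed.

Lemma fval_in (T : Type) (lt L : T -> T -> Prop) x a b :
  (L a x \/ a = x) -> fval T lt L x (Some (a, b)) = Some (code_val T lt x a b).
Proof.
  simpl. destruct (excluded_middle_informative (L a x \/ a = x)); tauto.
Qed.

Theorem theorem4p4 (T : Type) (lt : T -> T -> Prop)
  (hO : strict_porder lt) (hitov : itov lt)
  (hN : no_inf_decr (nbh_lt lt))
  (L : T -> T -> Prop) (hL : wo_linear_extension (nbh_lt lt) L) :
  embeds_into_Next (lt_pos2a1 L) (fun _ : pos2a1 T => bool)
    (fun _ : pos2a1 T => lt01) lt 2.
Proof.
  pose (g := fun x => proj1_sig (constructive_indefinite_description _ (len_ex T _ L hL x))).
  assert (Hg : forall x, len_spec T L x (g x)).
  { intro x. unfold g. exact (proj2_sig (constructive_indefinite_description _ (len_ex T _ L hL x))). }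
  clearbody g.
  pose proof hO as [irr tr].
  pose proof hL as [Lirr [Ltr [Llin [Lext Lwf]]]].
  exists (fun x => Word (fun _ : pos2a1 T => bool) (g x) (fval T lt L x)).
  split; [|split].
  -
    intro x. split; simpl.
    + exists (Some (x, true)). split.
      * apply Hg. exists x, true. auto.
      * exists (Some (x, false)). simpl. split; auto.
    + intro k. split.
      * intro Hk. apply Hg in Hk. destruct Hk as [a [b [-> D]]]. rewrite (fval_in T lt L x a b D). exists (code_val T lt x a b); reflexivity.
      * destruct k as [[a b]|]; [|simpl; intros [? H]; discriminate].
        intros [v Hv]. apply fval_some in Hv. apply Hg. exists a, b. tauto.
  -
    intros x y E. apply NNPP; intro Nxy.
    assert (E2 : forall k, fval T lt L x k = fval T lt L y k).
    { intro k. change (wval (Word (fun _ : pos2a1 T => bool) (g x) (fval T lt L x)) k =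
                       wval (Word (fun _ : pos2a1 T => bool) (g y) (fval T lt L y)) k).
      rewrite E. reflexivity. }
    destruct (Llin x y Nxy) as [H|H].
    + specialize (E2 (Some (y, false))).
      rewrite (fval_in T lt L y y false (or_intror eq_refl)) in E2.
      apply fval_some in E2. destruct E2 as [[D|D] _].
      * exact (Lirr _ (Ltr _ _ _ H D)).
      * congruence.
    + specialize (E2 (Some (x, false))).
      rewrite (fval_in T lt L x x false (or_intror eq_refl)) in E2.
      symmetry in E2. apply fval_some in E2. destruct E2 as [[D|D] _].
      * exact (Lirr _ (Ltr _ _ _ H D)).
      * congruence.
  - intros x y. split.
    +
      intro Hxy.
      pose (S := fun a => (L a x \/ a = x) /\ (L a y \/ a = y) /\
                 ~ ((lt a x <-> lt a y) /\ (lt x a <-> lt y a))).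
      assert (Hne : exists a, S a).
      { assert (Nxy : x <> y) by (intro; subst; exact (irr _ Hxy)).
        destruct (Llin x y Nxy) as [H|H].
        - exists x. unfold S. repeat split; auto. intros [[_ h] _]. exact (irr _ (h Hxy)).
        - exists y. unfold S. repeat split; auto. intros [_ [h _]]. exact (irr _ (h Hxy)). }
      destruct Hne as [a0 Ha0].
      destruct (wf_min T L S Lwf a0 Ha0) as [m [[Dx [Dy Nm]] Hmin]].
      assert (Below : forall a' b', L a' m ->
                fval T lt L x (Some (a', b')) = fval T lt L y (Some (a', b'))).
      { intros a' b' Ha'.
        assert (Dx' : L a' x \/ a' = x) by (left; destruct Dx as [Dx|Dx]; [exact (Ltr _ _ _ Ha' Dx)|subst; auto]).
        assert (Dy' : L a' y \/ a' = y) by (left; destruct Dy as [Dy|Dy]; [exact (Ltr _ _ _ Ha' Dy)|subst; auto]).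
        rewrite (fval_in T lt L x a' b' Dx'), (fval_in T lt L y a' b' Dy').
        assert (C : (lt a' x <-> lt a' y) /\ (lt x a' <-> lt y a')).
        { apply NNPP; intro C. apply (Hmin a' Ha'). exact (conj Dx' (conj Dy' C)). }
        unfold code_val. destruct b'.
        - rewrite (bP_iff _ _ (proj2 C)). reflexivity.
        - rewrite (bP_iff _ _ (proj1 C)). reflexivity. }
      destruct (classic (lt m x <-> lt m y)) as [I|I].
      * assert (Hxm : lt x m /\ ~ lt y m).
        { destruct (classic (lt x m)), (classic (lt y m)); try tauto.
          exfalso. exact (H (tr _ _ _ Hxy H0)). }
        exists (Some (m, true)). cbn [wlen wval]. split; [|split; [|split]].
        -- apply Hg. exists m, true; auto.
        -- apply Hg. exists m, true; auto.
        -- intros [[a' b']|] Hk; [|destruct Hk].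
           destruct Hk as [Hk|[-> [-> _]]]; [apply Below; auto|].
           rewrite (fval_in T lt L x m false Dx), (fval_in T lt L y m false Dy).
           unfold code_val. rewrite (bP_iff _ _ I). reflexivity.
        -- exists false, true.
           rewrite (fval_in T lt L x m true Dx), (fval_in T lt L y m true Dy).
           unfold code_val. split; [|split].
           ++ f_equal. rewrite (proj2 (bP_t _) (proj1 Hxm)). reflexivity.
           ++ f_equal. rewrite (proj2 (bP_f _) (proj2 Hxm)). reflexivity.
           ++ split; reflexivity.
      * assert (Hmx : ~ lt m x /\ lt m y).
        { destruct (classic (lt m x)), (classic (lt m y)); try tauto.
          exfalso. apply H0. exact (tr _ _ _ H Hxy). }
        exists (Some (m, false)). cbn [wlen wval]. split; [|split; [|split]].
        -- apply Hg. exists m, false; auto.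
        -- apply Hg. exists m, false; auto.
        -- intros [[a' b']|] Hk; [|destruct Hk].
           destruct Hk as [Hk|[_ [_ Hk]]]; [apply Below; auto|discriminate].
        -- exists false, true.
           rewrite (fval_in T lt L x m false Dx), (fval_in T lt L y m false Dy).
           unfold code_val. split; [|split].
           ++ f_equal. apply bP_f. exact (proj1 Hmx).
           ++ f_equal. apply bP_t. exact (proj2 Hmx).
           ++ split; reflexivity.
    +
      intros [k [Hkx [Hky [Hagree [va [vb [Ea [Eb Hab]]]]]]]]. simpl in *.
      destruct Hab as [-> ->].
      destruct k as [[a b]|]; [|destruct Hkx].
      apply fval_some in Ea. destruct Ea as [Dx Cx].
      apply fval_some in Eb. destruct Eb as [Dy Cy].
      destruct (@tri4 _ lt x y) as [h|[h|[h|h]]].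
      * exact h.
      * exfalso. unfold code_val in Cx, Cy. destruct b.
        -- apply Bool.negb_false_iff, (proj1 (bP_t _)) in Cx. apply Bool.negb_true_iff, (proj1 (bP_f _)) in Cy.
           apply Cy. exact (tr _ _ _ h Cx).
        -- apply (proj1 (bP_f _)) in Cx. apply (proj1 (bP_t _)) in Cy. apply Cx. exact (tr _ _ _ Cy h).
      * subst. congruence.
      * exfalso. destruct (key T lt hO hitov L hL x y a h Dx Dy) as [C1 C2].
        unfold code_val in Cx, Cy. destruct b.
        -- rewrite (bP_iff _ _ C2) in Cx. congruence.
        -- rewrite (bP_iff _ _ C1) in Cx. congruence.
Qed.
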